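(* Let $\Delta x>0$, $v>0$, $w>0$, $q_{max}>0$, $0\le n\le n_{max}$, and put $\bar n=n_{max}-n$. Let $U_{fw},U_{bw},Q,Y_{fw},Y_{bw}\in F$ with $U_{fw}(0)=U_{bw}(0)=Y_{fw}(0)=Y_{bw}(0)=0$ satisfy the road-section dynamics $$Q=A*Q\oplus B*U,\qquad Y=C*Q\oplus e,$$ where $U=(U_{fw},U_{bw})^T$, $Y=(Y_{fw},Y_{bw})^T$, $A=\gamma^{q_{max}\Delta x/v}\delta^{\Delta x/v}$ (a scalar), $B=(\gamma^{n}\delta^{\Delta x/v}\ \ e)$ (a $1\times 2$ row), $C=(e\ \ \gamma^{\bar n}\delta^{\Delta x/w})^T$ (a $2\times 1$ column), and $e$ in the second equation denotes the vector $(e,e)^T$. Explicitly, $Q(t)=\min\{Q(t-\Delta x/v)+q_{max}\Delta x/v,\ U_{fw}(t-\Delta x/v)+n,\ U_{bw}(t)\}$, $Y_{fw}=Q$, $Y_{bw}(t)=Q(t-\Delta x/w)+\bar n$ for $t>0$. Define $Z_{fw}(t)=\max(Y_{fw}(t)-n,0)$, $Z_{bw}(t)=\max(Y_{bw}(t)-\bar n,0)$ and $Z=(Z_{fw},Z_{bw})^T$. Then the matrix $H*(e\oplus C*A^{*}*B)$ is a service matrix for the road section seen as a server with input $U$ and output $Z$, i.e. $$Z\ge H*(e\oplus C*A^{*}*B)*U,\qquad H=\begin{pmatrix}\gamma^{-n}& e\\ e&\gamma^{-\bar n}\end{pmatrix},$$ where the $e$ added to $C*A^**B$ is the $2\times 2$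 identity matrix.
   Context: $F$ denotes the set of non-decreasing, non-negative functions of time $t\ge 0$. Min-plus operations: $(f\oplus g)(t)=\min(f(t),g(t))$, $(f*g)(t)=\min_{0\le s\le t}(f(s)+g(t-s))$; juxtaposition $fg$ means $f*g$. Special signals: $\varepsilon(t)=+\infty$ for all $t$; $e(0)=0$, $e(t)=+\infty$ for $t>0$; the gain $\gamma^p(0)=p$, $\gamma^p(t)=+\infty$ for $t>0$ (so $\gamma^p*f=f+p$; $p$ may be negative); the shift $\delta^T(t)=0$ for $0\le t\le T$, $\delta^T(t)=+\infty$ for $t>T$ (so $(\delta^T*f)(t)=f(\max(t-T,0))$ for nondecreasing $f$). Powers $f^0=e$, $f^k=f^{k-1}*f$; sub-additive closure $f^*=\bigoplus_{k\ge0}f^k$. For matrices, $(A\oplus B)_{ij}=A_{ij}\oplus B_{ij}$, $(A*B)_{ij}=\min_k A_{ik}*B_{kj}$; the identity matrix has $e$ on the diagonal and $\varepsilon$ off the diagonal. A matrix $\beta$ is a service matrix for a server with input $U$ and output $Z$ if $Z\ge\beta*U$ componentwise. Interpretation: $U_{fw}$ is the cumulated demand inflow from upstream, $U_{bw}$ the cumulated supply of the downstream section, $n$ the initial number of cars, $n_{max}$ the capacity (max number of cars) of the section. *)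

(* Defs.v *)
From Stdlib Require Import Reals Lra List ClassicalEpsilon.
Open Scope R_scope.

(** Extended reals: +oo is the min-plus zero (epsilon); -oo only for totality of inf. *)
Inductive Rbar : Type := Fin (r : R) | PInf | MInf.

Definition Rbar_le (x y : Rbar) : Prop :=
  match x, y with
  | MInf, _ => True
  | _, PInf => True
  | Fin a, Fin b => a <= b
  | _, _ => False
  end.

Definition Rbar_plus (x y : Rbar) : Rbar :=
  match x, y with
  | PInf, _ | _, PInf => PInf
  | MInf, _ | _, MInf => MInf
  | Fin a, Fin b => Fin (a + b)
  end.

Definition Rbar_min (x y : Rbar) : Rbar :=
  match x, y with
  | PInf, y => y
  | x, PInf => x
  | MInf, _ | _, MInf => MInf
  | Fin a, Fin b => Fin (Rmin a b)
  end.

Definition is_glb (P : Rbar -> Prop) (m : Rbar) : Prop :=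
  (forall x, P x -> Rbar_le m x) /\
  (forall l, (forall x, P x -> Rbar_le l x) -> Rbar_le l m).

(** Infimum of a set of extended reals (exists and is unique; chosen by epsilon). *)
Definition Rbar_inf (P : Rbar -> Prop) : Rbar :=
  epsilon (inhabits PInf) (fun m => is_glb P m).

(** Signals: functions of time; only t >= 0 is relevant. *)
Definition signal := R -> Rbar.

Definition lift (f : R -> R) : signal := fun t => Fin (f t).

Definition inF (f : R -> R) : Prop :=
  (forall t, 0 <= t -> 0 <= f t) /\ (forall s t, 0 <= s -> s <= t -> f s <= f t).

Definition oplus (f g : signal) : signal := fun t => Rbar_min (f t) (g t).

Definition conv (f g : signal) : signal := fun t =>
  Rbar_inf (fun x => exists s, 0 <= s <= t /\ x = Rbar_plus (f s) (g (t - s))).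

Definition eps : signal := fun _ => PInf.
Definition e : signal := fun t => if Req_EM_T t 0 then Fin 0 else PInf.
Definition gamma (p : R) : signal := fun t => if Req_EM_T t 0 then Fin p else PInf.
Definition delta (T : R) : signal := fun t => if Rle_dec t T then Fin 0 else PInf.

Fixpoint spow (f : signal) (k : nat) : signal :=
  match k with O => e | S k' => conv (spow f k') f end.

Definition star (f : signal) : signal := fun t =>
  Rbar_inf (fun x => exists k, x = spow f k t).

(** Matrices of signals, indexed by nat (dimensions implicit; entries outside are unused). *)
Definition mat := nat -> nat -> signal.

Definition madd (A B : mat) : mat := fun i j => oplus (A i j) (B i j).

Definition mmul (p : nat) (A B : mat) : mat := fun i j =>
  fold_right oplus eps (map (fun l => conv (A i l) (B l j)) (seq 0 p)).

Definition mid : mat := fun i j => if Nat.eqb i j then e else eps.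

Definition scal (a : signal) : mat := fun i j =>
  match i, j with 0, 0 => a | _, _ => eps end.

Definition vec2 (f g : signal) : mat := fun i j =>
  match i, j with 0, 0 => f | 1, 0 => g | _, _ => eps end.

Definition Amat (dx v qmax : R) : signal := conv (gamma (qmax * dx / v)) (delta (dx / v)).

Definition Bmat (dx v n : R) : mat := fun i j =>
  match i, j with
  | 0, 0 => conv (gamma n) (delta (dx / v))
  | 0, 1 => e
  | _, _ => eps end.

Definition Cmat (dx w nb : R) : mat := fun i j =>
  match i, j with
  | 0, 0 => e
  | 1, 0 => conv (gamma nb) (delta (dx / w))
  | _, _ => eps end.

Definition Hmat (n nb : R) : mat := fun i j =>
  match i, j with
  | 0, 0 => gamma (- n)
  | 0, 1 => e
  | 1, 0 => e
  | 1, 1 => gamma (- nb)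
  | _, _ => eps end.

Definition service2 (beta : mat) (U Z : mat) : Prop :=
  forall i, (i < 2)%nat -> forall t, 0 <= t -> Rbar_le (mmul 2 beta U i 0%nat t) (Z i 0%nat t).

(* Main.v *)
Require Import Defs.
From Stdlib Require Import Reals Lra Classical ClassicalEpsilon.
Open Scope R_scope.

Lemma le_refl x : Rbar_le x x.
Proof. destruct x; simpl; auto; lra. Qed.

Lemma le_trans x y z : Rbar_le x y -> Rbar_le y z -> Rbar_le x z.
Proof. destruct x, y, z; simpl; auto; try tauto; lra. Qed.

Lemma le_antisym x y : Rbar_le x y -> Rbar_le y x -> x = y.
Proof. destruct x, y; simpl; try tauto; intros; f_equal; lra. Qed.

Lemma plus_mono a a' b b' : Rbar_le a a' -> Rbar_le b b' ->
  Rbar_le (Rbar_plus a b) (Rbar_plus a' b').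
Proof. destruct a, a', b, b'; simpl; auto; try tauto; lra. Qed.

Lemma plus_le_fin x y a b : Rbar_le x (Fin a) -> Rbar_le y (Fin b) ->
  Rbar_le (Rbar_plus x y) (Fin (a + b)).
Proof. destruct x, y; simpl; auto; try tauto; lra. Qed.

Lemma le_PInf x : Rbar_le PInf x -> x = PInf.
Proof. destruct x; simpl; tauto. Qed.

Lemma min_le_l x y z : Rbar_le x z -> Rbar_le (Rbar_min x y) z.
Proof.
  destruct x, y, z; simpl; auto; try tauto; intros;
  try (apply Rle_trans with r; [apply Rmin_l|]); auto; lra.
Qed.

Lemma min_le_r x y z : Rbar_le y z -> Rbar_le (Rbar_min x y) z.
Proof.
  destruct x, y, z; simpl; auto; try tauto; intros;
  try (apply Rle_trans with r0; [apply Rmin_r|]); auto; lra.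
Qed.

Lemma le_min z x y : Rbar_le z x -> Rbar_le z y -> Rbar_le z (Rbar_min x y).
Proof.
  destruct x, y, z; simpl; auto; try tauto; intros; try apply Rmin_glb; auto.
Qed.

Lemma min_cases x y : Rbar_min x y = x \/ Rbar_min x y = y.
Proof.
  destruct x, y; simpl; auto.
  destruct (Rle_dec r r0).
  - left; rewrite Rmin_left; auto.
  - right; rewrite Rmin_right; auto; lra.
Qed.

Lemma glb_ex P : exists m, is_glb P m.
Proof.
  destruct (classic (forall x, P x -> x = PInf)) as [H|H].
  - exists PInf. split.
    + intros x Px; rewrite (H x Px); simpl; auto.
    + intros l _; destruct l; simpl; auto.
  - apply not_all_ex_not in H. destruct H as [x0 H0].
    assert (Px0 : P x0 /\ x0 <> PInf) by tauto. clear H0. destruct Px0 as [Px0 Nx0].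
    destruct (classic (exists c, forall x, P x -> Rbar_le (Fin c) x)) as [[c Hc]|Hn].
    + destruct x0 as [r0| |]; [|congruence|]; [|specialize (Hc _ Px0); simpl in Hc; tauto].
      set (E := fun r => P (Fin (- r))).
      assert (Hb : bound E).
      { exists (- c). intros r Er. specialize (Hc _ Er). simpl in Hc. lra. }
      assert (He : exists r, E r). { exists (- r0). unfold E. rewrite Ropp_involutive. auto. }
      destruct (completeness E Hb He) as [m [Hm1 Hm2]].
      exists (Fin (- m)). split.
      * intros x Px. destruct x as [r| |]; simpl; auto.
        -- assert (E (- r)) by (unfold E; rewrite Ropp_involutive; auto).
           specialize (Hm1 _ H). lra.
        -- specialize (Hc _ Px); simpl in Hc; tauto.
      * intros l Hl. destruct l as [a| |]; simpl; auto.
        -- assert (m <= - a).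
           { apply Hm2. intros r Er. specialize (Hl _ Er). simpl in Hl. lra. }
           lra.
        -- specialize (Hl _ Px0); simpl in Hl; tauto.
    + exists MInf. split.
      * intros; simpl; auto.
      * intros l Hl. destruct l as [a| |]; simpl; auto.
        -- exfalso; apply Hn; exists a; auto.
        -- apply Nx0. apply le_PInf; auto.
Qed.

Lemma inf_spec P : is_glb P (Rbar_inf P).
Proof. unfold Rbar_inf. apply epsilon_spec. apply glb_ex. Qed.

Lemma conv_le f g t s : 0 <= s <= t -> Rbar_le (conv f g t) (Rbar_plus (f s) (g (t - s))).
Proof. intros Hs. destruct (inf_spec (fun x => exists s, 0 <= s <= t /\ x = Rbar_plus (f s) (g (t - s)))) as [H _].
  apply H. eauto. Qed.

Lemma le_conv l f g t : (forall s, 0 <= s <= t -> Rbar_le l (Rbar_plus (f s) (g (t - s)))) ->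
  Rbar_le l (conv f g t).
Proof. intros Hl. destruct (inf_spec (fun x => exists s, 0 <= s <= t /\ x = Rbar_plus (f s) (g (t - s)))) as [_ H].
  apply H. intros x [s [Hs ->]]. auto. Qed.

Lemma conv_le_fin f g t s a b : 0 <= s <= t -> Rbar_le (f s) (Fin a) -> Rbar_le (g (t - s)) (Fin b) ->
  Rbar_le (conv f g t) (Fin (a + b)).
Proof. intros. eapply le_trans; [apply conv_le; eauto|]. apply plus_le_fin; auto. Qed.

Lemma star_le f k t : Rbar_le (star f t) (spow f k t).
Proof. unfold star. destruct (inf_spec (fun x => exists k, x = spow f k t)) as [H _]. apply H; eauto. Qed.

Lemma gamma0 p : gamma p 0 = Fin p.
Proof. unfold gamma. destruct (Req_EM_T 0 0); congruence. Qed.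
Lemma e0 : e 0 = Fin 0.
Proof. unfold e. destruct (Req_EM_T 0 0); congruence. Qed.
Lemma delta_le T x : x <= T -> delta T x = Fin 0.
Proof. unfold delta. destruct (Rle_dec x T); [auto|tauto]. Qed.

Lemma gd_le p T x : 0 <= x <= T -> Rbar_le (conv (gamma p) (delta T) x) (Fin p).
Proof. intros Hx. replace p with (p + 0) at 2 by ring. apply conv_le_fin with (s := 0).
  lra. rewrite gamma0; apply le_refl. rewrite delta_le by lra. apply le_refl. Qed.

Lemma e_conv_le f x a : 0 <= x -> Rbar_le (f x) (Fin a) -> Rbar_le (conv e f x) (Fin a).
Proof. intros. replace a with (0 + a) by ring. apply conv_le_fin with (s := 0). lra.
  rewrite e0; apply le_refl. rewrite Rminus_0_r; auto. Qed.

Definition mono (f : R -> R) := forall s t, 0 <= s -> s <= t -> f s <= f t.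

Lemma LB_gd p T f t : 0 <= t -> mono f ->
  Rbar_le (Fin (p + f (t - Rmin t T))) (conv (conv (gamma p) (delta T)) (lift f) t).
Proof.
  intros Ht Hf. apply le_conv. intros s Hs.
  destruct (Rle_dec s T) as [HsT|HsT].
  - apply le_trans with (Rbar_plus (Fin p) (Fin (f (t - s)))).
    + simpl. assert (f (t - Rmin t T) <= f (t - s)).
      { apply Hf. assert (Rmin t T <= t) by apply Rmin_l. lra.
        assert (s <= Rmin t T) by (apply Rmin_glb; lra). lra. }
      lra.
    + apply plus_mono; [|apply le_refl].
      apply le_conv. intros s1 Hs1. unfold gamma. destruct (Req_EM_T s1 0).
      * subst. rewrite delta_le by lra. simpl. lra.
      * simpl. auto.
  - assert (conv (gamma p) (delta T) s = PInf).
    { apply le_PInf. apply le_conv. intros s1 Hs1. unfold gamma. destruct (Req_EM_T s1 0).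
      - subst. unfold delta. destruct (Rle_dec (s - 0) T). lra. simpl; auto.
      - simpl; auto. }
    rewrite H. simpl. auto.
Qed.

Lemma LB_e f t : 0 <= t -> Rbar_le (Fin (f t)) (conv e (lift f) t).
Proof.
  intros Ht. apply le_conv. intros s Hs. unfold e. destruct (Req_EM_T s 0).
  - subst. unfold lift. rewrite Rminus_0_r. simpl. lra.
  - simpl; auto.
Qed.

Lemma BU_eq dx v n (U1 U2 : R -> R) t :
  mmul 2 (Bmat dx v n) (vec2 (lift U1) (lift U2)) 0%nat 0%nat t =
  Rbar_min (conv (conv (gamma n) (delta (dx / v))) (lift U1) t)
           (Rbar_min (conv e (lift U2) t) PInf).
Proof. reflexivity. Qed.

Lemma Qlemma dx v qmax n (Ufw Ubw Q : R -> R) :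
  0 < dx / v -> 0 < qmax * dx / v -> mono Ufw -> mono Q ->
  (forall t, 0 <= t ->
     lift Q t = oplus (conv (Amat dx v qmax) (lift Q))
                      (mmul 2 (Bmat dx v n) (vec2 (lift Ufw) (lift Ubw)) 0%nat 0%nat) t) ->
  forall t, 0 <= t -> exists k s r, 0 <= s <= t /\
    Rbar_le (spow (Amat dx v qmax) k s) (Fin r) /\
    (r + (n + Ufw ((t - s) - Rmin (t - s) (dx / v))) <= Q t \/ r + Ubw (t - s) <= Q t).
Proof.
  intros Htau Hq HU HQm HQ.
  set (tau := dx / v) in *. set (q := qmax * dx / v) in *.
  assert (Hind : forall N t, 0 <= t <= INR N * tau -> exists k s r, 0 <= s <= t /\
    Rbar_le (spow (Amat dx v qmax) k s) (Fin r) /\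
    (r + (n + Ufw ((t - s) - Rmin (t - s) tau)) <= Q t \/ r + Ubw (t - s) <= Q t)).
  { induction N as [|N IH]; intros t Ht.
    -
      assert (t = 0) by (simpl in Ht; lra). subst t.
      pose proof (HQ 0 (Rle_refl 0)) as H0. unfold oplus in H0. rewrite BU_eq in H0; fold tau in H0.
      destruct (min_cases (conv (Amat dx v qmax) (lift Q) 0)
         (Rbar_min (conv (conv (gamma n) (delta tau)) (lift Ufw) 0)
           (Rbar_min (conv e (lift Ubw) 0) PInf))) as [Hc|Hc]; rewrite Hc in H0.
      + exfalso. pose proof (LB_gd q tau Q 0 (Rle_refl 0) HQm) as L.
        unfold Amat in H0. fold tau q in H0. rewrite <- H0 in L. simpl in L.
        rewrite Rmin_left in L by lra. rewrite Rminus_0_r in L. lra.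
      + exists 0%nat, 0, 0. split; [lra|]. split.
        * simpl. rewrite e0. apply le_refl.
        * rewrite Rminus_0_r.
          destruct (min_cases (conv (conv (gamma n) (delta tau)) (lift Ufw) 0)
             (Rbar_min (conv e (lift Ubw) 0) PInf)) as [Hd|Hd]; rewrite Hd in H0.
          -- left. pose proof (LB_gd n tau Ufw 0 (Rle_refl 0) HU) as L.
             rewrite <- H0 in L. simpl in L. lra.
          -- right. assert (Rbar_min (conv e (lift Ubw) 0) PInf = conv e (lift Ubw) 0)
               by (destruct (conv e (lift Ubw) 0); reflexivity).
             rewrite H in H0. pose proof (LB_e Ubw 0 (Rle_refl 0)) as L.
             rewrite <- H0 in L. simpl in L. lra.
    - pose proof (HQ t (proj1 Ht)) as H0. unfold oplus in H0. rewrite BU_eq in H0; fold tau in H0.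
      destruct (min_cases (conv (Amat dx v qmax) (lift Q) t)
         (Rbar_min (conv (conv (gamma n) (delta tau)) (lift Ufw) t)
           (Rbar_min (conv e (lift Ubw) t) PInf))) as [Hc|Hc]; rewrite Hc in H0.
      + pose proof (LB_gd q tau Q t (proj1 Ht) HQm) as L.
        unfold Amat in H0. fold tau q in H0. rewrite <- H0 in L. simpl in L.
        set (d := Rmin t tau) in *.
        assert (Hd1 : d <= t) by apply Rmin_l. assert (Hd2 : d <= tau) by apply Rmin_r.
        assert (Hd0 : 0 <= d) by (apply Rmin_glb; lra).
        assert (Ht' : 0 <= t - d <= INR N * tau).
        { rewrite S_INR in Ht. split. lra. unfold d. destruct (Rle_dec t tau).
          - rewrite Rmin_left by auto. assert (0 <= INR N) by apply pos_INR. nra.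
          - rewrite Rmin_right by lra. lra. }
        destruct (IH (t - d) Ht') as [k [s [r [Hs [Hk Hb]]]]].
        exists (S k), (s + d), (r + q). split; [lra|]. split.
        * simpl. apply conv_le_fin with (s := s). lra. auto.
          replace (s + d - s) with d by ring. unfold Amat. fold tau q.
          apply gd_le. lra.
        * replace (t - (s + d)) with (t - d - s) by ring. lra.
      + exists 0%nat, 0, 0. split; [lra|]. split.
        * simpl. rewrite e0. apply le_refl.
        * rewrite Rminus_0_r.
          destruct (min_cases (conv (conv (gamma n) (delta tau)) (lift Ufw) t)
             (Rbar_min (conv e (lift Ubw) t) PInf)) as [Hd|Hd]; rewrite Hd in H0.
          -- left. pose proof (LB_gd n tau Ufw t (proj1 Ht) HU) as L.
             rewrite <- H0 in L. simpl in L. lra.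
          -- right. assert (Rbar_min (conv e (lift Ubw) t) PInf = conv e (lift Ubw) t)
               by (destruct (conv e (lift Ubw) t); reflexivity).
             rewrite H in H0. pose proof (LB_e Ubw t (proj1 Ht)) as L.
             rewrite <- H0 in L. simpl in L. lra. }
  intros t Ht. destruct (INR_unbounded (t / tau)) as [N HN].
  apply (Hind N). split; auto.
  apply Rmult_gt_compat_r with (r := tau) in HN; auto.
  unfold Rdiv in HN. rewrite Rmult_assoc, Rinv_l, Rmult_1_r in HN; lra.
Qed.

Lemma mm2 (A B : mat) i j t : mmul 2 A B i j t =
  Rbar_min (conv (A i 0%nat) (B 0%nat j) t) (Rbar_min (conv (A i 1%nat) (B 1%nat j) t) PInf).
Proof. reflexivity. Qed.
Lemma mm1 (A B : mat) i j t : mmul 1 A B i j t = Rbar_min (conv (A i 0%nat) (B 0%nat j) t) PInf.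
Proof. reflexivity. Qed.
Lemma madd_eq (A B : mat) i j t : madd A B i j t = Rbar_min (A i j t) (B i j t).
Proof. reflexivity. Qed.

Theorem theorem2 (dx v w qmax n nmax : R) (Ufw Ubw Q Yfw Ybw : R -> R) :
  0 < dx -> 0 < v -> 0 < w -> 0 < qmax -> 0 <= n -> n <= nmax ->
  inF Ufw -> inF Ubw -> inF Q -> inF Yfw -> inF Ybw ->
  Ufw 0 = 0 -> Ubw 0 = 0 -> Yfw 0 = 0 -> Ybw 0 = 0 ->
  (* Q = A*Q (+) B*U *)
  (forall t, 0 <= t ->
     lift Q t = oplus (conv (Amat dx v qmax) (lift Q))
                      (mmul 2 (Bmat dx v n) (vec2 (lift Ufw) (lift Ubw)) 0%nat 0%nat) t) ->
  (* Y = C*Q (+) e *)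
  (forall i, (i < 2)%nat -> forall t, 0 <= t ->
     vec2 (lift Yfw) (lift Ybw) i 0%nat t =
     madd (mmul 1 (Cmat dx w (nmax - n)) (scal (lift Q))) (vec2 e e) i 0%nat t) ->
  service2
    (mmul 2 (Hmat n (nmax - n))
       (madd mid (mmul 1 (mmul 1 (Cmat dx w (nmax - n)) (scal (star (Amat dx v qmax))))
                        (Bmat dx v n))))
    (vec2 (lift Ufw) (lift Ubw))
    (vec2 (lift (fun t => Rmax (Yfw t - n) 0)) (lift (fun t => Rmax (Ybw t - (nmax - n)) 0))).
Proof.
  intros Hdx Hv Hw Hqm Hn Hnm HUf HUb HQf HYf HYb U0 V0 Yf0 Yb0 HQ HY.
  assert (Htau : 0 < dx / v) by (apply Rdiv_lt_0_compat; lra).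
  assert (Htw : 0 < dx / w) by (apply Rdiv_lt_0_compat; lra).
  assert (Hq : 0 < qmax * dx / v) by (apply Rdiv_lt_0_compat; [nra|lra]).
  assert (HUm : mono Ufw) by (intros s t; apply (proj2 HUf)).
  assert (HQm : mono Q) by (intros s t; apply (proj2 HQf)).
  pose proof (Qlemma dx v qmax n Ufw Ubw Q Htau Hq HUm HQm HQ) as QL.
  assert (Q0 : Q 0 <= 0).
  { pose proof (HQ 0 (Rle_refl 0)) as H. unfold oplus in H. rewrite BU_eq in H.
    assert (L : Rbar_le (lift Q 0) (Fin 0)).
    { rewrite H. apply min_le_r, min_le_r, min_le_l. apply e_conv_le. lra.
      unfold lift; rewrite V0; simpl; lra. }
    simpl in L; lra. }
  assert (HY0 : forall t, 0 <= t -> Q t <= Yfw t).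
  { intros t Ht. pose proof (HY 0%nat ltac:(auto) t Ht) as H.
    rewrite madd_eq, mm1 in H. cbn [vec2 Cmat scal] in H.
    assert (L : Rbar_le (Fin (Q t)) (lift Yfw t)).
    { rewrite H. apply le_min. apply le_min. apply LB_e; auto. simpl; auto.
      unfold e. destruct (Req_EM_T t 0). subst; simpl; lra. simpl; auto. }
    simpl in L; lra. }
  assert (HY1 : forall t, 0 <= t -> Q (t - Rmin t (dx / w)) <= Rmax (Ybw t - (nmax - n)) 0).
  { intros t Ht. destruct (Req_EM_T t 0) as [->|Ht0].
    - rewrite Rmin_left by lra. rewrite Rminus_0_r. apply Rle_trans with 0; auto. apply Rmax_r.
    - pose proof (HY 1%nat ltac:(auto) t Ht) as H.
      rewrite madd_eq, mm1 in H. cbn [vec2 Cmat scal] in H.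
      assert (L : Rbar_le (Fin (nmax - n + Q (t - Rmin t (dx / w)))) (lift Ybw t)).
      { rewrite H. apply le_min. apply le_min. apply LB_gd; auto. simpl; auto.
        unfold e. destruct (Req_EM_T t 0). congruence. simpl; auto. }
      simpl in L. apply Rle_trans with (Ybw t - (nmax - n)). lra. apply Rmax_l. }
  intros i Hi t Ht.
  destruct i as [|[|i]]; [| |exfalso; apply (Nat.lt_irrefl 2); apply (Nat.le_lt_trans _ (S (S i))); [apply le_n_S, le_n_S, le_0_n|exact Hi]].
  -
    cbn [vec2]. unfold lift at 3.
    destruct (QL t Ht) as [k [s [r [Hs [Hk [Hb|Hb]]]]]].
    + rewrite mm2. apply min_le_l.
      set (s2 := Rmin (t - s) (dx / v)).
      assert (0 <= s2 <= t - s) by (split; [apply Rmin_glb; lra | apply Rmin_l]).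
      assert (s2 <= dx / v) by apply Rmin_r.
      apply le_trans with (Fin ((-n + (r + n)) + Ufw (t - s - s2))).
      * apply conv_le_fin with (s := s + s2). lra.
        -- rewrite mm2. apply min_le_l. apply conv_le_fin with (s := 0). lra.
           cbn [Hmat]. rewrite gamma0. apply le_refl.
           rewrite Rminus_0_r, madd_eq. apply min_le_r. rewrite mm1. apply min_le_l.
           apply conv_le_fin with (s := s). lra.
           ++ rewrite mm1. apply min_le_l. cbn [Cmat scal]. apply e_conv_le. lra.
              eapply le_trans; [apply star_le|]. exact Hk.
           ++ cbn [Bmat]. replace (s + s2 - s) with s2 by ring. apply gd_le. lra.
        -- cbn [vec2]. unfold lift. replace (t - (s + s2)) with (t - s - s2) by ring.
           apply le_refl.
      * simpl. pose proof (HY0 t Ht). pose proof (Rmax_l (Yfw t - n) 0). unfold s2 in *. lra.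
    + rewrite mm2. apply min_le_r, min_le_l.
      apply le_trans with (Fin ((-n + (r + 0)) + Ubw (t - s))).
      * apply conv_le_fin with (s := s). lra.
        -- rewrite mm2. apply min_le_l. apply conv_le_fin with (s := 0). lra.
           cbn [Hmat]. rewrite gamma0. apply le_refl.
           rewrite Rminus_0_r, madd_eq. apply min_le_r. rewrite mm1. apply min_le_l.
           apply conv_le_fin with (s := s). lra.
           ++ rewrite mm1. apply min_le_l. cbn [Cmat scal]. apply e_conv_le. lra.
              eapply le_trans; [apply star_le|]. exact Hk.
           ++ cbn [Bmat]. rewrite Rminus_diag, e0. apply le_refl.
        -- cbn [vec2]. unfold lift. apply le_refl.
      * simpl. pose proof (HY0 t Ht). pose proof (Rmax_l (Yfw t - n) 0). lra.
  -
    cbn [vec2]. unfold lift at 3.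
    set (d := Rmin t (dx / w)).
    assert (Hd : 0 <= d <= t) by (split; [apply Rmin_glb; lra | apply Rmin_l]).
    assert (Hdw : d <= dx / w) by apply Rmin_r.
    assert (Ht' : 0 <= t - d) by lra.
    pose proof (HY1 t Ht) as HY1t. fold d in HY1t.
    destruct (QL (t - d) Ht') as [k [s [r [Hs [Hk [Hb|Hb]]]]]].
    + rewrite mm2. apply min_le_l.
      set (s2 := Rmin (t - d - s) (dx / v)).
      assert (0 <= s2 <= t - d - s) by (split; [apply Rmin_glb; lra | apply Rmin_l]).
      assert (s2 <= dx / v) by apply Rmin_r.
      apply le_trans with (Fin ((-(nmax - n) + ((nmax - n + r) + n)) + Ufw (t - d - s - s2))).
      * apply conv_le_fin with (s := d + s + s2). lra.
        -- rewrite mm2. apply min_le_r, min_le_l. apply conv_le_fin with (s := 0). lra.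
           cbn [Hmat]. rewrite gamma0. apply le_refl.
           rewrite Rminus_0_r, madd_eq. apply min_le_r. rewrite mm1. apply min_le_l.
           apply conv_le_fin with (s := d + s). lra.
           ++ rewrite mm1. apply min_le_l. cbn [Cmat scal].
              apply conv_le_fin with (s := d). lra. apply gd_le. lra.
              replace (d + s - d) with s by ring.
              eapply le_trans; [apply star_le|]. exact Hk.
           ++ cbn [Bmat]. replace (d + s + s2 - (d + s)) with s2 by ring. apply gd_le. lra.
        -- cbn [vec2]. unfold lift. replace (t - (d + s + s2)) with (t - d - s - s2) by ring.
           apply le_refl.
      * simpl. unfold s2 in *. lra.
    + rewrite mm2. apply min_le_r, min_le_l.
      apply le_trans with (Fin ((-(nmax - n) + ((nmax - n + r) + 0)) + Ubw (t - d - s))).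
      * apply conv_le_fin with (s := d + s). lra.
        -- rewrite mm2. apply min_le_r, min_le_l. apply conv_le_fin with (s := 0). lra.
           cbn [Hmat]. rewrite gamma0. apply le_refl.
           rewrite Rminus_0_r, madd_eq. apply min_le_r. rewrite mm1. apply min_le_l.
           apply conv_le_fin with (s := d + s). lra.
           ++ rewrite mm1. apply min_le_l. cbn [Cmat scal].
              apply conv_le_fin with (s := d). lra. apply gd_le. lra.
              replace (d + s - d) with s by ring.
              eapply le_trans; [apply star_le|]. exact Hk.
           ++ cbn [Bmat]. rewrite Rminus_diag, e0. apply le_refl.
        -- cbn [vec2]. unfold lift. replace (t - (d + s)) with (t - d - s) by ring.
           apply le_refl.
      * simpl. lra.
Qed.
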